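(* Let $E\subset\mathbb{R}^2$ be $\mathcal H^1$ measurable with $\mathcal H^1(E)<\infty$, let $\alpha>0$, $r_0>0$, and let $F\subset E$ be a set with $d(F)<r_0/3$ such that (i) $\mathcal H^1(E\cap U(x,r))>(\tfrac34+\alpha)\,2r$ for all $x\in F$ and $0<r<r_0$, and (ii) $\mathcal H^1(E\cap B)\le(1+\alpha)\,d(B)$ for every set $B\subset\mathbb{R}^2$ with $F\cap B\neq\emptyset$ and $d(B)<r_0$. Then for all $x,y\in F$ with $x\neq y$, $$\mathcal H^1\big(E\cap U(x,y)\big)>\alpha|x-y|,$$ where $U(x,y)=U(x,|x-y|)\cap U(y,|x-y|)$.
   Context: $\mathcal H^1$ is the one-dimensional Hausdorff measure on $\mathbb{R}^2$, normalized so that $\mathcal H^1(A)=\lim_{\delta\to0}\inf\{\sum_i d(E_i): A\subset\bigcup_i E_i,\ d(E_i)<\delta\}$. $d(A)$ denotes the diameter of $A$; $U(z,r)$ is the open disc of centre $z$ and radius $r$. *)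

(* Defs.v *)
From HB Require Import structures.
From mathcomp Require Import all_boot all_order all_algebra.
From mathcomp Require Import all_classical all_reals all_analysis.
Set Implicit Arguments. Unset Strict Implicit. Unset Printing Implicit Defensive.
Import Order.TTheory GRing.Theory Num.Theory.
Local Open Scope classical_set_scope.
Local Open Scope ring_scope.

Section Plane.
Variable R : realType.
Definition plane := (R * R)%type.

Definition dist (p q : plane) : R :=
  Num.sqrt ((p.1 - q.1) ^+ 2 + (p.2 - q.2) ^+ 2).

(* diameter d(A) = sup {|x-y| : x,y in A}, with d(emptyset) = 0; may be +oo *)
Definition diam (A : set plane) : \bar R :=
  ereal_sup ([set 0%E] `|` [set (dist x y)%:E | x in A & y in A]).

Definition disc (z : plane) (r : R) : set plane := [set p | dist z p < r].

Definition lens (x y : plane) : set plane := disc x (dist x y) `&` disc y (dist x y).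

Definition hausdorff1_delta (delta : R) (A : set plane) : \bar R :=
  ereal_inf [set (\sum_(0 <= i <oo) diam (C i))%E | C in
     [set C : nat -> set plane | A `<=` \bigcup_i C i /\ forall i, (diam (C i) < delta%:E)%E]].

(* H^1(A) = lim_{delta -> 0} H^1_delta(A); H^1_delta(A) is nonincreasing in delta,
   so this limit is the supremum over delta > 0. *)
Definition hausdorff1 (A : set plane) : \bar R :=
  ereal_sup [set hausdorff1_delta delta A | delta in [set d : R | 0 < d]].

Definition H1_measurable (E : set plane) : Prop :=
  forall A : set plane, hausdorff1 A = (hausdorff1 (A `&` E) + hausdorff1 (A `&` ~` E))%E.
End Plane.

(* Main.v *)
Require Import Defs.
From HB Require Import structures.
From mathcomp Require Import all_boot all_order all_algebra.
From mathcomp Require Import all_classical all_reals all_analysis.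
From mathcomp Require Import ring lra.
Import Order.TTheory GRing.Theory Num.Theory.
Local Open Scope classical_set_scope.
Local Open Scope ring_scope.
Lemma dist_ge0 (R : realType) (p q : plane R) : 0 <= dist p q.
Proof. exact: sqrtr_ge0. Qed.

Lemma distC (R : realType) (p q : plane R) : dist p q = dist q p.
Proof. by rewrite /dist -(sqrrN (p.1 - q.1)) -(sqrrN (p.2 - q.2)) !opprB. Qed.

Lemma sqrt_le_add (R : realType) (u v w : R) : 0 <= u -> 0 <= v -> 0 <= w ->
  w <= u + v + 2 * Num.sqrt (u * v) -> Num.sqrt w <= Num.sqrt u + Num.sqrt v.
Proof.
move=> u0 v0 w0 h.
have su := sqrtr_ge0 u; have sv := sqrtr_ge0 v.
rewrite -(ler_pXn2r (n:=2)) ?nnegrE ?addr_ge0 ?sqrtr_ge0 //.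
rewrite sqr_sqrtr // sqrrD !sqr_sqrtr // -mulr_natr -sqrtrM //. lra.
Qed.

Lemma tri_aux (R : realType) (a b c d : R) :
  Num.sqrt ((a + c) ^+ 2 + (b + d) ^+ 2) <= Num.sqrt (a ^+ 2 + b ^+ 2) + Num.sqrt (c ^+ 2 + d ^+ 2).
Proof.
have h : (a * c + b * d) <= Num.sqrt ((a^+2 + b^+2) * (c^+2 + d^+2)).
  case: (lerP (a * c + b * d) 0) => h0; first by apply: le_trans h0 (sqrtr_ge0 _).
  rewrite -(ler_pXn2r (n:=2)) ?nnegrE ?sqrtr_ge0 ?(ltW h0) // sqr_sqrtr;
    have := sqr_ge0 (a * d - b * c); have := sqr_ge0 a; have := sqr_ge0 b; have := sqr_ge0 c; have := sqr_ge0 d; nra.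
have := sqr_ge0 a; have := sqr_ge0 b; have := sqr_ge0 c; have := sqr_ge0 d.
move: h; set P := Num.sqrt _ => h h1 h2 h3 h4.
apply: sqrt_le_add; try nra.
  exact: addr_ge0 (sqr_ge0 _) (sqr_ge0 _).
rewrite -/P !sqrrD; lra.
Qed.

Lemma dist_tri (R : realType) (p q s : plane R) : dist p s <= dist p q + dist q s.
Proof.
rewrite /dist.
have -> : p.1 - s.1 = (p.1 - q.1) + (q.1 - s.1) by ring.
have -> : p.2 - s.2 = (p.2 - q.2) + (q.2 - s.2) by ring.
exact: tri_aux.
Qed.

Lemma dist_eq0 (R : realType) (p q : plane R) : dist p q = 0 -> p = q.
Proof.
rewrite /dist => /eqP; rewrite sqrtr_eq0 => h.
have h1 : 0 <= (p.1 - q.1) ^+ 2 := sqr_ge0 _.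
have h2 : 0 <= (p.2 - q.2) ^+ 2 := sqr_ge0 _.
have e1 : (p.1 - q.1) ^+ 2 = 0 by apply/eqP; rewrite eq_le h1 andbT; lra.
have e2 : (p.2 - q.2) ^+ 2 = 0 by apply/eqP; rewrite eq_le h2 andbT; lra.
move/eqP: e1; rewrite sqrf_eq0 subr_eq0 => /eqP e1.
move/eqP: e2; rewrite sqrf_eq0 subr_eq0 => /eqP e2.
by case: p q e1 e2 {h h1 h2} => ? ? [? ?] /= -> ->.
Qed.

Local Open Scope ereal_scope.
Set Implicit Arguments.

Lemma diam_ge0 (R : realType) (A : set (plane R)) : 0 <= diam A.
Proof. by apply: ereal_sup_ubound; left. Qed.

Lemma diam_le_dist (R : realType) (A : set (plane R)) p q : A p -> A q ->
  (dist p q)%:E <= diam A.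
Proof. by move=> Ap Aq; apply: ereal_sup_ubound; right; exists p => //; exists q. Qed.

Lemma diam_sub (R : realType) (A B : set (plane R)) : A `<=` B -> diam A <= diam B.
Proof.
move=> AB; apply: ereal_sup_le => z [->|[p Ap [q Aq <-]]]; first by left.
by right; exists p; [exact: AB|exists q => //; exact: AB].
Qed.

Lemma diam_le (R : realType) (A : set (plane R)) (M : R) : (0 <= M)%R ->
  (forall p q, A p -> A q -> (dist p q <= M)%R) -> diam A <= M%:E.
Proof.
move=> M0 h; apply: ge_ereal_sup => z [->|[p Ap [q Aq <-]]]; first by rewrite lee_fin.
by rewrite lee_fin; exact: h.
Qed.

Lemma diam0 (R : realType) : diam (@set0 (plane R)) = 0.
Proof.
apply/eqP; rewrite eq_le diam_ge0 andbT.
by apply: diam_le => // p q [].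
Qed.

Lemma Hd_ge0 (R : realType) (d : R) (A : set (plane R)) : 0 <= hausdorff1_delta d A.
Proof.
apply: le_ereal_inf_tmp => s [C _ <-].
by apply: nneseries_ge0 => n _ _; exact: diam_ge0.
Qed.

Lemma Hd_anti (R : realType) (d d' : R) (A : set (plane R)) : (d <= d')%R ->
  hausdorff1_delta d' A <= hausdorff1_delta d A.
Proof.
move=> dd; apply: ereal_inf_le_tmp => s [C [cov dC] <-]; exists C => //.
split => // i; apply: lt_le_trans (dC i) _; by rewrite lee_fin.
Qed.

Lemma Hd_mono (R : realType) (d : R) (A B : set (plane R)) : A `<=` B ->
  hausdorff1_delta d A <= hausdorff1_delta d B.
Proof.
move=> AB; apply: ereal_inf_le_tmp => s [C [cov dC] <-]; exists C => //.
by split => //; apply: subset_trans cov.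
Qed.

Lemma Hd_le_H (R : realType) (d : R) (A : set (plane R)) : (0 < d)%R ->
  hausdorff1_delta d A <= hausdorff1 A.
Proof. by move=> d0; apply: ereal_sup_ubound; exists d. Qed.

Lemma H_mono (R : realType) (A B : set (plane R)) : A `<=` B ->
  hausdorff1 A <= hausdorff1 B.
Proof.
move=> AB; apply: ge_ereal_sup => s [d d0 <-].
apply: (le_trans (Hd_mono d AB)); exact: Hd_le_H.
Qed.

Lemma H_ge0 (R : realType) (A : set (plane R)) : 0 <= hausdorff1 A.
Proof. apply: (le_trans (Hd_ge0 1%R A)); exact: Hd_le_H. Qed.

Lemma series_interleave (R : realType) (f g : nat -> \bar R) :
  (forall n, 0 <= f n) -> (forall n, 0 <= g n) ->
  \sum_(0 <= i <oo) (if odd i then g i./2 else f i./2) <=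
  \sum_(0 <= i <oo) f i + \sum_(0 <= i <oo) g i.
Proof.
move=> f0 g0.
set h := fun i => if odd i then g i./2 else f i./2.
have h0 : forall i, 0 <= h i by move=> i; rewrite /h; case: ifP.
have part : forall n, \sum_(0 <= i < n.*2) h i =
    \sum_(0 <= i < n) f i + \sum_(0 <= i < n) g i.
  elim=> [|n IH]; first by rewrite !big_geq // adde0.
  rewrite doubleS !big_nat_recr //= IH.
  rewrite /h /= odd_double /= doubleK uphalf_double.
  by rewrite -addeA addeACA.
apply: lime_le; first by apply: is_cvg_nneseries => n _ _; exact: h0.
apply: nearW => n.
apply: le_trans (_ : \sum_(0 <= i < n.*2) h i <= _).
  apply: lee_sum_nneg_natr => // [k _ _|]; first exact: h0.
  by rewrite -addnn leq_addr.
rewrite part; apply: leeD; apply: nneseries_lim_ge => k _ _; [exact: f0|exact: g0].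
Qed.

Lemma ge0_not_fin (R : realType) (x : \bar R) : 0 <= x -> x \isn't a fin_num -> x = +oo.
Proof. move=> x0; rewrite ge0_fin_numE // -leNgt leye_eq => /eqP ->. by []. Qed.

Lemma ge0_neqNy (R : realType) (x : \bar R) : 0 <= x -> x != -oo.
Proof. by move=> x0; rewrite gt_eqF // (lt_le_trans ltNy0 x0). Qed.

Lemma Hd_subadd (R : realType) (d : R) (A B : set (plane R)) :
  hausdorff1_delta d (A `|` B) <= hausdorff1_delta d A + hausdorff1_delta d B.
Proof.
have [fA|nfA] := boolP (hausdorff1_delta d A \is a fin_num); last first.
  by rewrite (@ge0_not_fin _ _ (Hd_ge0 _ _) nfA) addye ?leey // ge0_neqNy // Hd_ge0.
have [fB|nfB] := boolP (hausdorff1_delta d B \is a fin_num); last first.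
  by rewrite (@ge0_not_fin _ _ (Hd_ge0 _ _) nfB) addey ?leey // ge0_neqNy // Hd_ge0.
apply/lee_addgt0Pr => e e0.
have e20 : (0 < e / 2)%R by rewrite divr_gt0.
have [_ [C [covC dC] <-] hC] := lb_ereal_inf_adherent e20 fA.
have [_ [D [covD dD] <-] hD] := lb_ereal_inf_adherent e20 fB.
set K := fun i => if odd i then D i./2 else C i./2.
have dK : \sum_(0 <= i <oo) diam (K i) = \sum_(0 <= i <oo) (if odd i then diam (D i./2) else diam (C i./2)).
  by apply: eq_eseriesr => i _; rewrite /K; case: ifP.
apply: le_trans (_ : \sum_(0 <= i <oo) diam (K i) <= _).
  apply: ereal_inf_lbound; exists K => //; split.
    move=> p [Ap|Bp].
      have [i _ Ci] := covC p Ap; exists i.*2 => //.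
      by rewrite /K odd_double doubleK.
    have [i _ Di] := covD p Bp; exists i.*2.+1 => //.
    by rewrite /K /= odd_double /= uphalf_double.
  by move=> i; rewrite /K; case: ifP.
rewrite dK; apply: le_trans.
  apply: (@series_interleave _ (fun i => diam (C i)) (fun i => diam (D i))) => n; exact: diam_ge0.
apply: le_trans (leeD (ltW hC) (ltW hD)) _.
rewrite addeACA -EFinD -splitr. by [].
Qed.

Lemma H_subadd (R : realType) (A B : set (plane R)) :
  hausdorff1 (A `|` B) <= hausdorff1 A + hausdorff1 B.
Proof.
apply: ge_ereal_sup => _ [d d0 <-].
apply: le_trans (Hd_subadd d A B) _.
by apply: leeD; exact: Hd_le_H.
Qed.

Lemma Hd_sep (R : realType) (d eta : R) (A B : set (plane R)) : (d <= eta)%R ->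
  (forall a b, A a -> B b -> (eta <= dist a b)%R) ->
  hausdorff1_delta d A + hausdorff1_delta d B <= hausdorff1_delta d (A `|` B).
Proof.
move=> de sep; apply: le_ereal_inf_tmp => _ [C [cov dC] <-].
have noboth : forall i, C i `&` A !=set0 -> C i `&` B !=set0 -> False.
  move=> i [a [Ca Aa]] [b [Cb Bb]].
  have h1 := @diam_le_dist _ _ _ _ Ca Cb; have h2 := dC i; have h3 := sep _ _ Aa Bb.
  have : ((dist a b)%:E < eta%:E) by apply: le_lt_trans h1 (lt_le_trans h2 _); rewrite lee_fin.
  by rewrite lte_fin ltNge h3.
set CA := fun i => [set p | C i p /\ (C i `&` A !=set0)].
set CB := fun i => [set p | C i p /\ (C i `&` B !=set0)].
have sA : forall i, CA i `<=` C i by move=> i p [].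
have sB : forall i, CB i `<=` C i by move=> i p [].
have hA : hausdorff1_delta d A <= \sum_(0 <= i <oo) diam (CA i).
  apply: ereal_inf_lbound; exists CA => //; split.
    move=> a Aa; have [i _ Ci] := cov a (or_introl Aa).
    by exists i => //; split => //; exists a.
  by move=> i; apply: le_lt_trans (diam_sub (sA i)) (dC i).
have hB : hausdorff1_delta d B <= \sum_(0 <= i <oo) diam (CB i).
  apply: ereal_inf_lbound; exists CB => //; split.
    move=> a Aa; have [i _ Ci] := cov a (or_intror Aa).
    by exists i => //; split => //; exists a.
  by move=> i; apply: le_lt_trans (diam_sub (sB i)) (dC i).
apply: le_trans (leeD hA hB) _.
rewrite -nneseriesD; last by move=> *; exact: diam_ge0.
  2: by move=> *; exact: diam_ge0.
apply: lee_nneseries => [i _ _|i _]; first by rewrite adde_ge0 // diam_ge0.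
case: (pselect (C i `&` A !=set0)) => hAi.
  have : diam (CB i) <= 0%R%:E.
    by apply: diam_le => // p q [_ hBi]; case: (noboth i hAi hBi).
  move=> h0; apply: le_trans (leeD (diam_sub (sA i)) h0) _; by rewrite adde0.
have : diam (CA i) <= 0%R%:E.
  by apply: diam_le => // p q [_ hAi']; case: (hAi hAi').
move=> h0; apply: le_trans (leeD h0 (diam_sub (sB i))) _; by rewrite add0e.
Qed.

Lemma H_fin (R : realType) (A B : set (plane R)) : A `<=` B -> hausdorff1 B < +oo ->
  hausdorff1 A \is a fin_num.
Proof.
move=> AB hB; rewrite ge0_fin_numE ?H_ge0 //.
exact: le_lt_trans (H_mono AB) hB.
Qed.

Lemma H_sep (R : realType) (eta : R) (A B : set (plane R)) : (0 < eta)%R ->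
  (forall a b, A a -> B b -> (eta <= dist a b)%R) ->
  hausdorff1 (A `|` B) < +oo ->
  hausdorff1 A + hausdorff1 B <= hausdorff1 (A `|` B).
Proof.
move=> e0 sep fin.
have fA : hausdorff1 A \is a fin_num by apply: H_fin fin => p; left.
have fB : hausdorff1 B \is a fin_num by apply: H_fin fin => p; right.
rewrite -leeBrDr //; apply: ge_ereal_sup => _ [d1 d10 <-].
have f1 : hausdorff1_delta d1 A \is a fin_num.
  rewrite ge0_fin_numE ?Hd_ge0 //; apply: le_lt_trans; first exact: Hd_le_H.
  by rewrite -ge0_fin_numE ?H_ge0.
rewrite leeBrDr // -leeBrDl //; apply: ge_ereal_sup => _ [d2 d20 <-].
rewrite leeBrDl //.
set d := Num.min (Num.min d1 d2) eta.
have d0 : (0 < d)%R by rewrite !lt_min d10 d20 e0.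
apply: le_trans (_ : hausdorff1_delta d A + hausdorff1_delta d B <= _).
  by apply: leeD; apply: Hd_anti; rewrite /d !ge_min lexx ?orbT.
apply: le_trans (Hd_sep d eta A B _ sep) _.
  by rewrite /d ge_min lexx orbT.
exact: Hd_le_H.
Qed.

Local Close Scope ereal_scope.
Unset Implicit Arguments.

Lemma dist_xx (R : realType) (p : plane R) : dist p p = 0.
Proof. by rewrite /dist !subrr expr2 mulr0 addr0 sqrtr0. Qed.

Theorem mainTheorem2 (R : realType) (E F : set (plane R)) (alpha r0 : R) :
  H1_measurable E ->
  (hausdorff1 E < +oo)%E ->
  0 < alpha -> 0 < r0 ->
  F `<=` E ->
  (diam F < EFin (r0 / 3)%R)%E ->
  (forall (x : plane R) (r : R), F x -> 0 < r -> r < r0 ->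
     (EFin ((3 / 4 + alpha) * (2 * r))%R < hausdorff1 (E `&` disc x r))%E) ->
  (forall B : set (plane R), F `&` B !=set0 -> (diam B < EFin r0)%E ->
     (hausdorff1 (E `&` B) <= EFin (1 + alpha)%R * diam B)%E) ->
  forall x y : plane R, F x -> F y -> x <> y ->
    (EFin (alpha * dist x y)%R < hausdorff1 (E `&` lens x y))%E.
Proof.
move=> _ Hfin a0 r00 FE dF Hi Hii x y Fx Fy xy.
rewrite /lens; set d := dist x y.
have d0 : 0 < d.
  rewrite lt_neqAle dist_ge0 andbT; apply/eqP => h; apply: xy; exact: dist_eq0.
have dlt : d < r0 / 3.
  by rewrite -lte_fin; apply: le_lt_trans dF; apply: diam_le_dist.
have finE : forall A, A `<=` E -> hausdorff1 A = (fine (hausdorff1 A))%:E.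
  by move=> A AE; rewrite fineK //; exact: H_fin AE Hfin.
have Hy := Hi y d Fy d0 ltac:(lra).
rewrite (finE _ (@subIsetl _ _ _)) lte_fin in Hy.
set hy := fine _ in Hy.
set cy := hy - (3 / 4 + alpha) * (2 * d).
have cy0 : 0 < cy by rewrite /cy; lra.
have k0 : 0 < 3 + 4 * alpha by lra.
set t := Num.min (d / 2) (cy / (3 + 4 * alpha)).
have t0 : 0 < t by rewrite /t lt_min; apply/andP; split; rewrite divr_gt0.
have td : t <= d / 2 by rewrite /t ge_min lexx.
have tc : t * (3 + 4 * alpha) <= cy.
  by rewrite -ler_pdivlMr // /t ge_min lexx orbT.
set a := d - t.
have Hx := Hi x a Fx ltac:(rewrite /a; lra) ltac:(rewrite /a; lra).
rewrite (finE _ (@subIsetl _ _ _)) lte_fin in Hx.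
set hx := fine _ in Hx.
set B0 := disc x d `|` disc y d.
set S := E `&` B0.
set A1 := E `&` disc x a.
set B1 := S `&` ~` disc x d.
have SE : S `<=` E by apply: subIsetl.
have A1E : A1 `<=` E by apply: subIsetl.
have B1E : B1 `<=` E by move=> p [[]].
have st1 : (hausdorff1 A1 + hausdorff1 B1 <= hausdorff1 S)%E.
  apply: le_trans (@H_sep _ t A1 B1 t0 _ _) _.
  - move=> p q [_ hp] [_ hq]; move: hp hq; rewrite /disc /= => hp /negP; rewrite -leNgt => hq.
    have := @dist_tri _ x p q; rewrite /a in hp; lra.
  - by apply: le_lt_trans Hfin; apply: H_mono => p [/A1E|/B1E].
  - by apply: H_mono => p [[Ep hp]|[]] //; split => //; left; rewrite /disc /=; move: hp; rewrite /disc /= /a; lra.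
have dB0 : (diam B0 <= (3 * d)%:E)%E.
  apply: diam_le; first lra.
  have cxy := @distC _ x y. have dd : dist x y = d by [].
  move=> p q hp hq; have T1 := @dist_tri _ p x q; have T2 := @dist_tri _ p y q.
  have T3 := @dist_tri _ x y q; have T4 := @dist_tri _ y x q.
  have c1 := @distC _ p x; have c2 := @distC _ p y.
  move: hp hq; rewrite /B0 /disc /= -/d => [[hp|hp] [hq|hq]]; lra.
have st2 : (hausdorff1 S <= ((1 + alpha) * (3 * d))%:E)%E.
  apply: le_trans (Hii B0 _ _) _.
  - by exists x; split => //; left; rewrite /disc /= dist_xx.
  - by apply: le_lt_trans dB0 _; rewrite lte_fin; lra.
  - by rewrite EFinM; apply: lee_wpmul2l => //; rewrite lee_fin; lra.
have st3 : (hausdorff1 (E `&` disc y d) <=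
    hausdorff1 (E `&` (disc x d `&` disc y d)) + hausdorff1 B1)%E.
  apply: le_trans (H_subadd _ _); apply: H_mono => p [Ep hp].
  case: (pselect (disc x d p)) => hx'; first by left.
  by right; split => //; split => //; right.
rewrite (finE _ A1E) (finE _ B1E) (finE _ SE) in st1 st2.
rewrite (finE _ (@subIsetl _ _ _)) (finE _ B1E) (finE (E `&` (disc x d `&` disc y d)) (@subIsetl _ _ _)) in st3.
rewrite (finE _ (@subIsetl _ _ _)).
rewrite -EFinD lee_fin in st1.
rewrite lee_fin in st2.
rewrite -EFinD lee_fin in st3.
rewrite lte_fin.
rewrite -/hx -/hy in st1 st3.
move: Hx st1 st2 st3 tc.
set hl := fine (hausdorff1 _).
set hb := fine (hausdorff1 _).
set hs := fine (hausdorff1 _).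
rewrite /a => Hx st1 st2 st3 tc.
have : cy = hy - (3 / 4 + alpha) * (2 * d) by [].
nra.
Qed.
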